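(* Let $p$ be a prime with $p\equiv 1\pmod{12}$. There exist $x,y\in\mathbb{F}_p$ with $x^4+6x^2-3=0$ and $y^2=x^3-x$ if and only if there exists $y\in\mathbb{F}_p$ with $y^8+360y^4-48=0$. *)

(* Defs.v *)
From mathcomp Require Import all_boot all_algebra.

(* Main.v *)
Require Import Defs.
From mathcomp Require Import all_boot all_algebra.
From mathcomp Require Import ring.
Import GRing.Theory.
Local Open Scope ring_scope.

Lemma small_div (p : nat) (hp : prime p) (hmod : p = 1 %[mod 12]) :
  ~~ (p %| 2)%N /\ ((p %| 13)%N -> p = 13).
Proof.
have H2 : all (fun q => (q %| 2)%N ==> (q %% 12 == 1)%N ==> prime q ==> false) (iota 0 3) by [].
have H13 : all (fun q => (q %| 13)%N ==> (q %% 12 == 1)%N ==> prime q ==> (q == 13)) (iota 0 14) by [].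
split.
  apply/negP => d.
  have lp : (p < 3)%N by rewrite ltnS; exact: dvdn_leq d.
  move/allP: H2 => /(_ p); rewrite mem_iota add0n lp /= d hp.
  by rewrite hmod => /(_ isT).
move=> d.
have lp : (p < 14)%N by rewrite ltnS; exact: dvdn_leq d.
move/allP: H13 => /(_ p); rewrite mem_iota add0n lp /= d hp hmod /=.
by move=> /(_ isT) /eqP.
Qed.

Theorem lemma1 (p : nat) (hp : prime p) (hmod : p = 1 %[mod 12]) :
  (exists x y : 'F_p, x ^+ 4 + 6%:R * x ^+ 2 - 3%:R = 0 /\ y ^+ 2 = x ^+ 3 - x)
  <->
  (exists y : 'F_p, y ^+ 8 + 360%:R * y ^+ 4 - 48%:R = 0).
Proof.
have [n2 n13] := small_div p hp hmod.
have chp := pchar_Fp hp.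
split.
  move=> [x [y [hx hy]]]; exists y.
  have h8 : y ^+ 8 = (x ^+ 3 - x) ^+ 4 by rewrite -hy -exprM.
  have h4 : y ^+ 4 = (x ^+ 3 - x) ^+ 2 by rewrite -hy -exprM.
  rewrite h8 h4.
  have -> : (x ^+ 3 - x) ^+ 4 + 360%:R * (x ^+ 3 - x) ^+ 2 - 48%:R =
    (x ^+ 8 - 10%:R * x ^+ 6 + 69%:R * x ^+ 4 - 88%:R * x ^+ 2 + 16%:R) *
    (x ^+ 4 + 6%:R * x ^+ 2 - 3%:R) by ring.
  by rewrite hx mulr0.
move=> [y hy].
case: (boolP (p == 13%N)) => [/eqP p13 | p13].
  have h13 : (13%:R : 'F_p) = 0 by rewrite -p13 pchar_Fp_0.
  have e : (y ^+ 4 - 2%:R) ^+ 2 = (y ^+ 8 + 360%:R * y ^+ 4 - 48%:R)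
      - 13%:R * (28%:R * y ^+ 4 - 4%:R) by ring.
  rewrite hy h13 mul0r subr0 in e.
  have hY : y ^+ 4 = 2%:R by apply/eqP; rewrite -subr_eq0; move/eqP: e; rewrite expf_eq0.
  exists (y ^+ 2), y; split.
    have -> : (y ^+ 2) ^+ 4 + 6%:R * (y ^+ 2) ^+ 2 - 3%:R
      = (y ^+ 4) ^+ 2 + 6%:R * y ^+ 4 - 3%:R by ring.
    rewrite hY; transitivity (13%:R : 'F_p); [ring | exact: h13].
  have -> : (y ^+ 2) ^+ 3 - y ^+ 2 = y ^+ 2 * (y ^+ 4 - 1) by ring.
  rewrite hY; have -> : (2%:R - 1 : 'F_p) = 1 by ring.
  by rewrite mulr1.
have h52 : (52%:R : 'F_p) != 0.
  rewrite -(dvdn_pcharf chp).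
  rewrite (_ : 52 = 2 * 2 * 13)%N // !Euclid_dvdM // (negbTE n2) /=.
  by apply/negP => /n13 /eqP; rewrite (negbTE p13).
have hY : y ^+ 4 - 28%:R != 0.
  apply/negP => /eqP e.
  have e' : y ^+ 4 = 28%:R by apply/eqP; rewrite -subr_eq0 e.
  have y8 : y ^+ 8 = (y ^+ 4) ^+ 2 by rewrite -exprM.
  rewrite y8 e' in hy.
  have : (10816%:R : 'F_p) == 0.
    by rewrite -hy; apply/eqP; ring.
  rewrite -(dvdn_pcharf chp) (_ : 10816 = 2 * 2 * 2 * 2 * 2 * 2 * 13 * 13)%N //.
  rewrite !Euclid_dvdM // (negbTE n2) /=.
  by rewrite orbb => /n13 /eqP; rewrite (negbTE p13).
pose x : 'F_p := 52%:R * y ^+ 2 / (y ^+ 4 - 28%:R).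
have hx2 : x ^+ 2 = (y ^+ 4 + 24%:R) / 52%:R.
  apply/eqP; rewrite -subr_eq0.
  have -> : x ^+ 2 - (y ^+ 4 + 24%:R) / 52%:R =
    - (y ^+ 4 - 392%:R) * (y ^+ 8 + 360%:R * y ^+ 4 - 48%:R)
      / (52%:R * (y ^+ 4 - 28%:R) ^+ 2).
    by rewrite /x; field; rewrite hY h52.
  by rewrite hy mulr0 mul0r.
exists x, y; split.
  have x4 : x ^+ 4 = (x ^+ 2) ^+ 2 by rewrite -exprM.
  rewrite x4.
  rewrite hx2.
  have -> : ((y ^+ 4 + 24%:R) / 52%:R) ^+ 2 + 6%:R * ((y ^+ 4 + 24%:R) / 52%:R) - 3%:R
    = (y ^+ 8 + 360%:R * y ^+ 4 - 48%:R) / (52%:R ^+ 2).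
    field; rewrite h52 andbT.
    have -> : (2704%:R : 'F_p) = 52%:R * 52%:R by ring.
    by rewrite mulf_neq0.
  by rewrite hy mul0r.
have -> : x ^+ 3 - x = x * (x ^+ 2 - 1) by ring.
by rewrite hx2 /x; field; rewrite ?hY ?h52.
Qed.
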